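(* Let $\alpha\ge 0$ and $p>1$, set $\beta=\frac{\alpha+2}{p+1}$, and let $n$ be a positive integer with $\beta(\beta+n-2)>0$. Let $w$ be the solution of \[ w''+\frac{n-1}{t}w'=\frac{t^{\alpha}}{w^p},\qquad w(0)=1,\quad w'(0)=0, \] and let $w_0(t)=c_0t^{\beta}$ with $c_0=\bigl[\beta(\beta+n-2)\bigr]^{-1/(p+1)}$. If $w$ and $w_0$ intersect infinitely many times on $(0,\infty)$, then the solution curve of the MEMS problem makes infinitely many turns, i.e. $\lambda(t)=t^{\alpha+2}/w(t)^{p+1}$ has $\lambda'(t)$ changing sign infinitely many times on $(0,\infty)$.
   Context: The MEMS problem is \[ u''+\frac{n-1}{r}u'+\lambda\frac{r^{\alpha}}{(1-u)^p}=0\quad(0<r<1),\qquad u'(0)=u(1)=0,\qquad 0<u<1. \] The solution $w$ is positive and increasing and is defined for all $t>0$. The function $w_0$ solves the same differential equation as $w$. The solution curve is $t\mapsto(\lambda,u(0))=(t^{\alpha+2}/w(t)^{p+1},\,1-1/w(t))$, $t\in(0,\infty)$, with $u(r)=1-w(tr)/w(t)$ the solution at $\lambda(t)$. A turn is a sign change of $\lambda'(t)$. *)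

(* Defs.v *)
From Stdlib Require Import Reals.
From Coquelicot Require Import Coquelicot.
Open Scope R_scope.

Definition is_mems_solution (alpha p : R) (n : nat) (w : R -> R) : Prop :=
  w 0 = 1 /\
  filterlim (fun h => (w h - w 0) / h) (at_right 0) (locally 0) /\
  (forall t, 0 <= t -> 0 < w t) /\
  (forall t, 0 < t ->
     ex_derive w t /\ ex_derive (Derive w) t /\
     Derive (Derive w) t + (INR n - 1) / t * Derive w t
       = Rpower t alpha / Rpower (w t) p).

(* the set {t > 0 | f t = g t} is infinite *)
Definition intersect_infinitely (f g : R -> R) : Prop :=
  ~ (exists l : list R, forall t, 0 < t -> f t = g t -> List.In t l).

Definition changes_sign_infinitely (f : R -> R) : Prop :=
  forall k : nat, exists s : nat -> R,
    0 < s O /\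
    forall i, (i < k)%nat -> s i < s (S i) /\ f (s i) * f (s (S i)) < 0.

Definition beta_of (alpha p : R) : R := (alpha + 2) / (p + 1).

Definition c0_of (alpha p : R) (n : nat) : R :=
  Rpower (beta_of alpha p * (beta_of alpha p + INR n - 2)) (- (1 / (p + 1))).

Definition w0_of (alpha p : R) (n : nat) (t : R) : R :=
  c0_of alpha p n * Rpower t (beta_of alpha p).

Definition lambda_of (alpha p : R) (w : R -> R) (t : R) : R :=
  Rpower t (alpha + 2) / Rpower (w t) (p + 1).

(* Main.v *)
Require Import Defs.
From Stdlib Require Import Reals Lra Lia Classical IndefiniteDescription List.
From Coquelicot Require Import Coquelicot.
Open Scope R_scope.

Lemma exp_le' x y : x <= y -> exp x <= exp y.
Proof. intros [H|H]; [left; apply exp_increasing; auto | subst; lra]. Qed.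

Lemma cont_pos f x : continuity_pt f x -> 0 < f x ->
  exists d, 0 < d /\ forall t, Rabs (t - x) < d -> f x / 2 < f t.
Proof.
  intros Hc Hp. unfold continuity_pt, continue_in, limit1_in, limit_in in Hc.
  destruct (Hc (f x / 2)) as [d [Hd H]]; [lra|].
  exists d; split; auto. intros t Ht.
  destruct (Req_dec t x) as [->|Hne]; [lra|].
  assert (Hx := H t (conj (conj I (not_eq_sym Hne)) Ht)). simpl in Hx. unfold R_dist in Hx.
  apply Rabs_def2 in Hx. lra.
Qed.

Lemma right_zero f x l eta : derivable_pt_lim f x l -> 0 < eta ->
  (forall h, 0 < h < eta -> f (x + h) = 0) -> f x = 0 /\ l = 0.
Proof.
  intros Hd He Hz.
  assert (Hfx : f x = 0).
  { apply NNPP; intro Hne.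
    destruct (Hd 1 Rlt_0_1) as [del Hdel].
    set (a := Rabs (f x)).
    assert (Ha : 0 < a) by (apply Rabs_pos_lt; auto).
    set (h := Rmin (Rmin del eta) (a / (2 * (Rabs l + 1))) / 2).
    assert (Hl := Rabs_pos l).
    assert (H1 : 0 < a / (2 * (Rabs l + 1))) by (apply Rdiv_lt_0_compat; lra).
    assert (Hdp := cond_pos del).
    assert (Hh0 : 0 < h).
    { unfold h. apply Rdiv_lt_0_compat; [|lra]. apply Rmin_pos; [apply Rmin_pos|]; lra. }
    assert (Hh1 : h < del /\ h < eta /\ h <= a / (2 * (Rabs l + 1))).
    { unfold h. assert (Q1 := Rmin_l (Rmin del eta) (a / (2 * (Rabs l + 1)))).
      assert (Q2 := Rmin_r (Rmin del eta) (a / (2 * (Rabs l + 1)))).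
      assert (Q3 := Rmin_l del eta). assert (Q4 := Rmin_r del eta). lra. }
    assert (Hq := Hdel h (Rgt_not_eq _ _ Hh0) ltac:(rewrite Rabs_pos_eq; lra)).
    rewrite Hz in Hq by lra.
    assert (Htri := Rabs_triang ((0 - f x) / h - l) l).
    replace ((0 - f x) / h - l + l) with (- f x / h) in Htri by (field; lra).
    unfold Rdiv in Htri. rewrite Rabs_mult, Rabs_Ropp, Rabs_inv, (Rabs_pos_eq h) in Htri by lra.
    fold a in Htri.
    assert (a < h * (Rabs l + 1)).
    { apply (Rmult_lt_reg_r (/ h)). apply Rinv_0_lt_compat; lra.
      replace (h * (Rabs l + 1) * / h) with (Rabs l + 1) by (field; lra). lra. }
    assert (h * (Rabs l + 1) <= a / 2).
    { apply (Rmult_le_reg_r (/ (Rabs l + 1))). apply Rinv_0_lt_compat; lra.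
      replace (h * (Rabs l + 1) * / (Rabs l + 1)) with h by (field; lra).
      replace (a / (2 * (Rabs l + 1))) with (a / 2 * / (Rabs l + 1)) in Hh1 by (field; lra). lra. }
    lra. }
  split; auto.
  apply NNPP; intro Hne.
  assert (Hl : 0 < Rabs l) by (apply Rabs_pos_lt; auto).
  destruct (Hd (Rabs l) Hl) as [del Hdel].
  assert (Hdp := cond_pos del).
  set (h := Rmin del eta / 2).
  assert (Hh0 : 0 < h) by (unfold h; apply Rdiv_lt_0_compat; [apply Rmin_pos|]; lra).
  assert (Hh1 : h < del /\ h < eta).
  { unfold h. assert (Q3 := Rmin_l del eta). assert (Q4 := Rmin_r del eta). lra. }
  assert (Hq := Hdel h (Rgt_not_eq _ _ Hh0) ltac:(rewrite Rabs_pos_eq; lra)).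
  rewrite Hz, Hfx in Hq by lra.
  replace ((0 - 0) / h - l) with (- l) in Hq by (field; lra).
  rewrite Rabs_Ropp in Hq. lra.
Qed.

Lemma local_uniq (u D D' : R -> R) s d0 K : 0 < d0 -> 0 <= K ->
  (forall t, s - d0 <= t <= s -> derivable_pt_lim u t (D t) /\ derivable_pt_lim D t (D' t) /\
      Rabs (D' t) <= K * (Rabs (D t) + Rabs (u t))) ->
  u s = 0 -> D s = 0 -> exists d, 0 < d <= d0 /\ forall t, s - d <= t <= s -> u t = 0.
Proof.
  intros Hd0 HK Hder Hus HDs.
  set (d := Rmin d0 (/ (2 * (1 + K)))).
  assert (Hi : 0 < / (2 * (1 + K))) by (apply Rinv_0_lt_compat; lra).
  assert (Hd : 0 < d) by (apply Rmin_pos; lra).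
  assert (Hdd0 : d <= d0) by apply Rmin_l.
  assert (Hdk : d * (1 + K) <= / 2).
  { assert (d <= / (2 * (1 + K))) by apply Rmin_r.
    apply (Rmult_le_compat_r (1 + K)) in H; [|lra].
    replace (/ (2 * (1 + K)) * (1 + K)) with (/2) in H by (field; lra). lra. }
  exists d; split; [lra|].
  set (h := fun t => Rabs (u t) + Rabs (D t)).
  assert (Hc : forall c, s - d <= c <= s -> continuity_pt h c).
  { intros c Hc. destruct (Hder c ltac:(lra)) as [H1 [H2 _]].
    change (continuity_pt (plus_fct (comp Rabs u) (comp Rabs D)) c).
    apply continuity_pt_plus; apply continuity_pt_comp; try apply Rcontinuity_abs;
      apply derivable_continuous_pt; [exists (D c) | exists (D' c)]; auto. }
  destruct (continuity_ab_maj h (s - d) s ltac:(lra) Hc) as [Mx [HM HMx]].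
  assert (HM0 : h Mx <= 0).
  { destruct (Req_dec Mx s) as [->|Hne].
    - unfold h. rewrite Hus, HDs, Rabs_R0. lra.
    - assert (Hlt : Mx < s) by lra.
      destruct (MVT_cor2 u D Mx s Hlt) as [c [Hc1 Hc2]].
      { intros c Hc'. apply Hder; lra. }
      destruct (MVT_cor2 D D' Mx s Hlt) as [c' [Hc1' Hc2']].
      { intros c0 Hc'. apply Hder; lra. }
      rewrite Hus in Hc1. rewrite HDs in Hc1'.
      assert (E1 : Rabs (u Mx) = Rabs (D c) * (s - Mx)).
      { replace (u Mx) with (- (D c * (s - Mx))) by lra.
        rewrite Rabs_Ropp, Rabs_mult, (Rabs_pos_eq (s - Mx)); lra. }
      assert (E2 : Rabs (D Mx) = Rabs (D' c') * (s - Mx)).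
      { replace (D Mx) with (- (D' c' * (s - Mx))) by lra.
        rewrite Rabs_Ropp, Rabs_mult, (Rabs_pos_eq (s - Mx)); lra. }
      assert (B1 : Rabs (D c) <= h Mx).
      { assert (h c <= h Mx) by (apply HM; lra). unfold h in *.
        assert (Q := Rabs_pos (u c)). lra. }
      assert (B2 : Rabs (D' c') <= K * h Mx).
      { destruct (Hder c' ltac:(lra)) as [_ [_ Hb]].
        assert (h c' <= h Mx) by (apply HM; lra). unfold h in *.
        assert (K * (Rabs (D c') + Rabs (u c')) <= K * (Rabs (u Mx) + Rabs (D Mx))).
        { apply Rmult_le_compat_l; lra. } lra. }
      assert (Hh0 : 0 <= h Mx) by (unfold h; assert (Q := Rabs_pos (u Mx)); assert (Q' := Rabs_pos (D Mx)); lra).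
      assert (Hsm : 0 < s - Mx <= d) by lra.
      assert (h Mx <= (1 + K) * h Mx * d).
      { unfold h at 1. rewrite E1, E2.
        assert (Rabs (D c) * (s - Mx) <= h Mx * d) by (apply Rmult_le_compat; try lra; apply Rabs_pos).
        assert (Rabs (D' c') * (s - Mx) <= K * h Mx * d) by (apply Rmult_le_compat; try lra; apply Rabs_pos).
        lra. }
      assert ((1 + K) * h Mx * d = h Mx * (d * (1 + K))) by ring.
      assert (h Mx * (d * (1 + K)) <= h Mx * / 2) by (apply Rmult_le_compat_l; lra).
      lra. }
  intros t Ht. assert (h t <= h Mx) by (apply HM; lra). unfold h in H, HM0.
  assert (Q := Rabs_pos (u t)). assert (Q' := Rabs_pos (D t)).
  assert (Rabs (u t) = 0) by lra. apply Rabs_eq_0; auto.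
Qed.

Lemma c0_pos alpha p n : 0 < c0_of alpha p n.
Proof. unfold c0_of, Rpower. apply exp_pos. Qed.

Lemma w0_pos alpha p n t : 0 < w0_of alpha p n t.
Proof. unfold w0_of. apply Rmult_lt_0_compat; [apply c0_pos | unfold Rpower; apply exp_pos]. Qed.

Lemma ln_w0 alpha p n t : 0 < t -> ln (w0_of alpha p n t) =
   - (1 / (p + 1)) * ln (beta_of alpha p * (beta_of alpha p + INR n - 2)) + beta_of alpha p * ln t.
Proof.
  intros Ht. unfold w0_of, c0_of, Rpower. rewrite <- exp_plus, ln_exp. ring.
Qed.

Lemma w0_pow alpha p n t : 0 < beta_of alpha p * (beta_of alpha p + INR n - 2) -> 1 < p -> 0 < t ->
  Rpower (w0_of alpha p n t) (p + 1) =
  Rpower t (alpha + 2) / (beta_of alpha p * (beta_of alpha p + INR n - 2)).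
Proof.
  intros HB Hp Ht. set (B := beta_of alpha p * (beta_of alpha p + INR n - 2)) in *.
  unfold Rpower at 1. rewrite ln_w0 by auto. fold B.
  replace ((p + 1) * (- (1 / (p + 1)) * ln B + beta_of alpha p * ln t))
    with ((alpha + 2) * ln t + - ln B) by (unfold beta_of; field; lra).
  rewrite exp_plus, exp_Ropp, exp_ln by auto. unfold Rpower. reflexivity.
Qed.

Lemma w0_ode alpha p n t : 0 < beta_of alpha p * (beta_of alpha p + INR n - 2) -> 1 < p -> 0 < t ->
  let b := beta_of alpha p in let c0 := c0_of alpha p n in
  c0 * (b * ((b - 1) * Rpower t (b - 1 - 1))) + (INR n - 1) / t * (c0 * (b * Rpower t (b - 1)))
  = Rpower t alpha / Rpower (w0_of alpha p n t) p.
Proof.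
  intros HB Hp Ht b c0. set (B := beta_of alpha p * (beta_of alpha p + INR n - 2)) in *.
  assert (R1 : Rpower t alpha / Rpower (w0_of alpha p n t) p =
     exp ((b - 1 - 1) * ln t) * B * exp (- (1 / (p + 1)) * ln B)).
  { assert (Ed : forall a c, exp a / exp c = exp (a - c)).
    { intros a c. unfold Rminus. rewrite exp_plus, exp_Ropp. field. apply Rgt_not_eq, exp_pos. }
    unfold Rpower at 2. rewrite ln_w0 by auto. fold B. unfold Rpower. rewrite Ed.
    replace (alpha * ln t - (p * (- (1 / (p + 1)) * ln B + beta_of alpha p * ln t)))
      with ((b - 1 - 1) * ln t + (ln B + - (1 / (p + 1)) * ln B)) by (unfold b, beta_of; field; lra).
    rewrite !exp_plus, exp_ln by auto. ring. }
  rewrite R1.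
  assert (E : Rpower t (b - 1) = Rpower t (b - 1 - 1) * t).
  { unfold Rpower. replace ((b - 1) * ln t) with ((b - 1 - 1) * ln t + ln t) by ring.
    rewrite exp_plus, exp_ln; auto. }
  rewrite E. unfold c0, c0_of. unfold Rpower. unfold B, b. field. lra.
Qed.

Lemma ex_derive_lambda alpha p (w : R -> R) t : 0 < t -> 0 < w t -> ex_derive w t ->
  ex_derive (lambda_of alpha p w) t.
Proof.
  intros Ht Hw Hd. unfold lambda_of.
  apply ex_derive_div.
  - eexists. apply is_derive_Reals, derivable_pt_lim_power; auto.
  - apply (ex_derive_comp (fun x => Rpower x (p + 1)) w); auto.
    eexists. apply is_derive_Reals, derivable_pt_lim_power; auto.
  - unfold Rpower. apply Rgt_not_eq, exp_pos.
Qed.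

Lemma both_signs (f df : R -> R) K t1 t2 c : t1 < t2 ->
  (forall x, t1 <= x <= t2 -> derivable_pt_lim f x (df x)) ->
  f t1 = K -> f t2 = K -> t1 <= c <= t2 -> f c <> K ->
  (exists x, t1 <= x <= t2 /\ df x > 0) /\ (exists y, t1 <= y <= t2 /\ df y < 0).
Proof.
  intros H12 Hd H1 H2 Hc Hne.
  assert (Hc1 : t1 < c) by (destruct (Req_dec c t1); [subst; tauto | lra]).
  assert (Hc2 : c < t2) by (destruct (Req_dec c t2); [subst; tauto | lra]).
  destruct (MVT_cor2 f df t1 c Hc1) as [x [Ex Hx]]; [intros; apply Hd; lra|].
  destruct (MVT_cor2 f df c t2 Hc2) as [y [Ey Hy]]; [intros; apply Hd; lra|].
  rewrite H1 in Ex. rewrite H2 in Ey.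
  destruct (Rlt_or_le (f c) K) as [Hl|Hl].
  - assert (df x < 0).
    { destruct (Rlt_or_le (df x) 0); auto.
      assert (0 <= df x * (c - t1)) by (apply Rmult_le_pos; lra). lra. }
    assert (df y > 0).
    { destruct (Rlt_or_le 0 (df y)); auto.
      assert (df y * (t2 - c) <= 0).
      { replace (df y * (t2 - c)) with (- ((- df y) * (t2 - c))) by ring.
        assert (0 <= (- df y) * (t2 - c)) by (apply Rmult_le_pos; lra). lra. }
      lra. }
    split; [exists y | exists x]; split; auto; lra.
  - assert (f c > K) by (destruct Hl; auto; congruence).
    assert (df x > 0).
    { destruct (Rlt_or_le 0 (df x)); auto.
      assert (df x * (c - t1) <= 0).
      { replace (df x * (c - t1)) with (- ((- df x) * (c - t1))) by ring.
        assert (0 <= (- df x) * (c - t1)) by (apply Rmult_le_pos; lra). lra. }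
      lra. }
    assert (df y < 0).
    { destruct (Rlt_or_le (df y) 0); auto.
      assert (0 <= df y * (t2 - c)) by (apply Rmult_le_pos; lra). lra. }
    split; [exists x | exists y]; split; auto; lra.
Qed.

Lemma lam_iff alpha p n (w : R -> R) t :
  0 < beta_of alpha p * (beta_of alpha p + INR n - 2) -> 1 < p -> 0 < t -> 0 < w t ->
  (lambda_of alpha p w t = beta_of alpha p * (beta_of alpha p + INR n - 2) <-> w t = w0_of alpha p n t).
Proof.
  intros HB Hp Ht Hw. set (B := beta_of alpha p * (beta_of alpha p + INR n - 2)) in *.
  assert (HP := w0_pow alpha p n t HB Hp Ht). fold B in HP.
  unfold lambda_of. split.
  - intros H.
    assert (Hx : 0 < Rpower (w t) (p + 1)) by (unfold Rpower; apply exp_pos).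
    assert (Rpower (w t) (p + 1) = Rpower (w0_of alpha p n t) (p + 1)).
    { rewrite HP. rewrite <- H. field. split; [lra|]. unfold Rpower. apply Rgt_not_eq, exp_pos. }
    unfold Rpower in H0. apply exp_inv in H0.
    apply ln_inv; auto. apply w0_pos. apply (Rmult_eq_reg_l (p + 1)); auto; lra.
  - intros H. rewrite H, HP. field. split; [lra|]. unfold Rpower. apply Rgt_not_eq, exp_pos.
Qed.

Lemma lip p m x y : 0 < p -> 0 < m -> m <= x -> m <= y ->
  Rabs (/ Rpower x p - / Rpower y p) <= p * Rpower m (- p - 1) * Rabs (x - y).
Proof.
  intros Hp Hm Hx Hy.
  assert (Hgen : forall a b, m <= a -> a < b ->
     Rabs (Rpower b (- p) - Rpower a (- p)) <= p * Rpower m (- p - 1) * (b - a)).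
  { intros a b Ha Hab.
    destruct (MVT_cor2 (fun z => Rpower z (- p)) (fun z => - p * Rpower z (- p - 1)) a b Hab)
      as [c [Ec Hc]].
    { intros c Hc. apply derivable_pt_lim_power. lra. }
    rewrite Ec. rewrite Rabs_mult, (Rabs_pos_eq (b - a)) by lra.
    apply Rmult_le_compat_r; [lra|].
    rewrite Rabs_mult, Rabs_Ropp, (Rabs_pos_eq p) by lra.
    rewrite (Rabs_pos_eq (Rpower c _)) by (unfold Rpower; left; apply exp_pos).
    apply Rmult_le_compat_l; [lra|]. unfold Rpower. apply exp_le'.
    assert (ln m <= ln c) by (apply ln_le; lra).
    assert (0 <= (p + 1) * (ln c - ln m)) by (apply Rmult_le_pos; lra). lra. }
  rewrite <- !Rpower_Ropp.
  destruct (Rtotal_order x y) as [H|[H|H]].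
  - rewrite Rabs_minus_sym, (Rabs_minus_sym x y), (Rabs_pos_eq (y - x)) by lra. apply Hgen; lra.
  - subst. unfold Rminus. rewrite !Rplus_opp_r, Rabs_R0. lra.
  - rewrite (Rabs_pos_eq (x - y)) by lra. apply Hgen; lra.
Qed.

Lemma unique_left alpha p n (w : R -> R) s b :
  0 <= alpha -> 1 < p -> (1 <= n)%nat ->
  0 < beta_of alpha p * (beta_of alpha p + INR n - 2) ->
  is_mems_solution alpha p n w -> 0 < s < b ->
  (forall t, s < t <= b -> w t = w0_of alpha p n t) ->
  exists d, 0 < d < s /\ forall t, s - d <= t <= b -> w t = w0_of alpha p n t.
Proof.
  intros Ha Hp Hn HB [Hw0 [Hlim [Hpos Hode]]] Hs Heq.
  set (bt := beta_of alpha p). set (c0 := c0_of alpha p n).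
  set (u := fun t => w t - w0_of alpha p n t).
  set (D := fun t => Derive w t - c0 * (bt * Rpower t (bt - 1))).
  set (D' := fun t => Derive (Derive w) t - c0 * (bt * ((bt - 1) * Rpower t (bt - 1 - 1)))).
  assert (Hw0d : forall t, 0 < t -> is_derive (w0_of alpha p n) t (c0 * (bt * Rpower t (bt - 1)))).
  { intros t Ht. unfold w0_of. apply is_derive_scal. apply is_derive_Reals, derivable_pt_lim_power; auto. }
  assert (Hud : forall t, 0 < t -> derivable_pt_lim u t (D t)).
  { intros t Ht. apply is_derive_Reals. unfold u, D.
    exact (is_derive_minus _ _ _ _ _ (Derive_correct _ _ (proj1 (Hode t Ht))) (Hw0d t Ht)). }
  assert (HDd : forall t, 0 < t -> derivable_pt_lim D t (D' t)).
  { intros t Ht. apply is_derive_Reals. unfold D, D'.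
    assert (H3 : is_derive (fun t => c0 * (bt * Rpower t (bt - 1))) t (c0 * (bt * ((bt - 1) * Rpower t (bt - 1 - 1))))).
    { apply is_derive_scal, is_derive_scal. apply is_derive_Reals, derivable_pt_lim_power; auto. }
    exact (is_derive_minus _ _ _ _ _ (Derive_correct _ _ (proj1 (proj2 (Hode t Ht)))) H3). }
  assert (HD'e : forall t, 0 < t -> D' t = - ((INR n - 1) / t) * D t +
     (Rpower t alpha / Rpower (w t) p - Rpower t alpha / Rpower (w0_of alpha p n t) p)).
  { intros t Ht. destruct (Hode t Ht) as [_ [_ E]].
    assert (E0 := w0_ode alpha p n t HB Hp Ht). simpl in E0. fold bt c0 in E0.
    unfold D', D. rewrite <- E, <- E0. ring. }
  destruct (right_zero u s (D s) (b - s) (Hud s ltac:(lra)) ltac:(lra)) as [Hus HDs].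
  { intros h Hh. unfold u. rewrite Heq; [ring | lra]. }
  assert (Hws : w s = w0_of alpha p n s) by (unfold u in Hus; lra).
  assert (Hwpos : 0 < w s) by (apply Hpos; lra).
  destruct (cont_pos w s) as [d1 [Hd1 H1]]; auto.
  { apply derivable_continuous_pt. exists (Derive w s). apply is_derive_Reals, Derive_correct, Hode; lra. }
  destruct (cont_pos (w0_of alpha p n) s) as [d2 [Hd2 H2]]; [| rewrite <- Hws; auto |].
  { apply derivable_continuous_pt. exists (c0 * (bt * Rpower s (bt - 1))). apply is_derive_Reals, Hw0d; lra. }
  set (m := w s / 2).
  set (d0 := Rmin (s / 2) (Rmin d1 d2 / 2)).
  assert (Hd0 : 0 < d0) by (apply Rmin_pos; [lra | apply Rdiv_lt_0_compat; [apply Rmin_pos|]; lra]).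
  assert (Hd0s : d0 <= s / 2) by apply Rmin_l.
  assert (Hd0d : d0 < d1 /\ d0 < d2).
  { assert (d0 <= Rmin d1 d2 / 2) by apply Rmin_r.
    assert (Rmin d1 d2 <= d1) by apply Rmin_l. assert (Rmin d1 d2 <= d2) by apply Rmin_r.
    assert (0 < Rmin d1 d2) by (apply Rmin_pos; lra). lra. }
  set (K := (INR n - 1) * (2 / s) + Rpower s alpha * (p * Rpower m (- p - 1))).
  assert (Hn1 : 0 <= INR n - 1) by (assert (1 <= INR n) by (replace 1 with (INR 1) by reflexivity; apply le_INR; auto); lra).
  assert (HK : 0 <= K).
  { unfold K. apply Rplus_le_le_0_compat.
    - apply Rmult_le_pos; [lra | apply Rlt_le, Rdiv_lt_0_compat; lra].
    - apply Rmult_le_pos; [unfold Rpower; left; apply exp_pos|].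
      apply Rmult_le_pos; [lra | unfold Rpower; left; apply exp_pos]. }
  destruct (local_uniq u D D' s d0 K Hd0 HK) as [d [Hd Hloc]]; auto.
  { intros t Ht.
    assert (Htp : 0 < t) by lra.
    split; [apply Hud; auto|]. split; [apply HDd; auto|].
    rewrite HD'e by auto.
    assert (Hwt : m < w t).
    { unfold m. apply H1. apply Rabs_def1; lra. }
    assert (Hw0t : m < w0_of alpha p n t).
    { unfold m. rewrite Hws. apply H2. apply Rabs_def1; lra. }
    assert (Hm : 0 < m) by (unfold m; lra).
    eapply Rle_trans; [apply Rabs_triang|].
    rewrite Rabs_mult, Rabs_Ropp.
    assert (A1 : Rabs ((INR n - 1) / t) <= (INR n - 1) * (2 / s)).
    { rewrite Rabs_pos_eq by (apply Rdiv_le_0_compat; lra).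
      unfold Rdiv. apply Rmult_le_compat_l; [lra|].
      replace (2 * / s) with (/ (s / 2)) by (field; lra).
      apply Rinv_le_contravar; lra. }
    assert (A2 : Rabs (Rpower t alpha / Rpower (w t) p - Rpower t alpha / Rpower (w0_of alpha p n t) p)
              <= Rpower s alpha * (p * Rpower m (- p - 1)) * Rabs (u t)).
    { unfold Rdiv. rewrite <- Rmult_minus_distr_l, Rabs_mult.
      rewrite (Rabs_pos_eq (Rpower t alpha)) by (unfold Rpower; left; apply exp_pos).
      rewrite Rmult_assoc. apply Rmult_le_compat.
      - unfold Rpower; left; apply exp_pos.
      - apply Rabs_pos.
      - unfold Rpower. apply exp_le'. apply Rmult_le_compat_l; auto. apply ln_le; lra.
      - unfold u. apply lip; lra. }
    assert (A3 : Rabs ((INR n - 1) / t) * Rabs (D t) <= (INR n - 1) * (2 / s) * Rabs (D t))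
      by (apply Rmult_le_compat_r; auto; apply Rabs_pos).
    assert (Q1 := Rabs_pos (D t)). assert (Q2 := Rabs_pos (u t)).
    assert (Q3 : 0 <= Rpower s alpha * (p * Rpower m (- p - 1))).
    { apply Rmult_le_pos; [unfold Rpower; left; apply exp_pos|].
      apply Rmult_le_pos; [lra | unfold Rpower; left; apply exp_pos]. }
    assert (Q4 : 0 <= (INR n - 1) * (2 / s)) by (apply Rmult_le_pos; [lra | apply Rlt_le, Rdiv_lt_0_compat; lra]).
    unfold K. nra. }
  exists d. split; [lra|].
  intros t Ht. destruct (Rle_or_lt t s) as [Hts|Hts].
  - assert (u t = 0) by (apply Hloc; lra). unfold u in H; lra.
  - apply Heq; lra.
Qed.

Lemma near_zero (w : R -> R) : w 0 = 1 ->
  filterlim (fun h => (w h - w 0) / h) (at_right 0) (locally 0) ->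
  exists d, 0 < d /\ forall h, 0 < h < d -> 1 - h < w h.
Proof.
  intros H0 Hlim. pose proof (proj1 (filterlim_locally _ _) Hlim) as Hl. clear Hlim. rename Hl into Hlim.
  destruct (Hlim (mkposreal 1 Rlt_0_1)) as [del Hdel].
  exists del. split; [apply cond_pos|]. intros h Hh.
  assert (Hb : ball 0 del h).
  { unfold ball; simpl; unfold AbsRing_ball, abs, minus, plus, opp; simpl.
    rewrite Ropp_0, Rplus_0_r, Rabs_pos_eq; lra. }
  specialize (Hdel h Hb ltac:(lra)).
  unfold ball in Hdel; simpl in Hdel; unfold AbsRing_ball, abs, minus, plus, opp in Hdel; simpl in Hdel.
  rewrite Ropp_0, Rplus_0_r, H0 in Hdel.
  apply Rabs_def2 in Hdel. destruct Hdel as [_ Hd].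
  assert (- 1 * h < w h - 1).
  { apply (Rmult_lt_reg_r (/ h)). apply Rinv_0_lt_compat; lra.
    replace (-1 * h * / h) with (-1) by (field; lra). exact Hd. }
  lra.
Qed.

Lemma w0_small alpha p n : 1 < p -> 0 <= alpha ->
  exists d, 0 < d /\ forall h, 0 < h < d -> w0_of alpha p n h < 1 / 2.
Proof.
  intros Hp Ha.
  assert (Hb : 0 < beta_of alpha p) by (unfold beta_of; apply Rdiv_lt_0_compat; lra).
  assert (Hc := c0_pos alpha p n).
  exists (exp (ln (/ (2 * c0_of alpha p n)) / beta_of alpha p)). split; [apply exp_pos|].
  intros h Hh. unfold w0_of.
  assert (ln h < ln (/ (2 * c0_of alpha p n)) / beta_of alpha p).
  { rewrite <- (ln_exp (ln (/ (2 * c0_of alpha p n)) / beta_of alpha p)). apply ln_increasing; lra. }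
  assert (beta_of alpha p * ln h < ln (/ (2 * c0_of alpha p n))).
  { apply (Rmult_lt_compat_l (beta_of alpha p)) in H; auto.
    replace (beta_of alpha p * (ln (/ (2 * c0_of alpha p n)) / beta_of alpha p)) with
      (ln (/ (2 * c0_of alpha p n))) in H by (field; lra). lra. }
  apply exp_increasing in H0. rewrite exp_ln in H0 by (apply Rinv_0_lt_compat; lra).
  unfold Rpower.
  apply (Rmult_lt_compat_l (c0_of alpha p n)) in H0; auto.
  replace (c0_of alpha p n * / (2 * c0_of alpha p n)) with (1/2) in H0 by (field; lra).
  rewrite Rmult_comm in H0. rewrite (Rmult_comm (c0_of _ _ _)). lra.
Qed.

Lemma noint alpha p n (w : R -> R) a b :
  0 <= alpha -> 1 < p -> (1 <= n)%nat ->
  0 < beta_of alpha p * (beta_of alpha p + INR n - 2) ->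
  is_mems_solution alpha p n w -> 0 < a < b ->
  ~ (forall t, a <= t <= b -> w t = w0_of alpha p n t).
Proof.
  intros Ha Hp Hn HB Hw Hab Hall.
  set (E := fun x => 0 < - x <= a /\ forall t, - x <= t <= b -> w t = w0_of alpha p n t).
  assert (HE : E (- a)).
  { split; [lra|]. intros t Ht. apply Hall; lra. }
  destruct (completeness E) as [m [Hub Hlub]].
  { exists 0. intros x [Hx _]. lra. }
  { exists (- a); auto. }
  assert (Hm0 : m <= 0) by (apply Hlub; intros x [Hx _]; lra).
  assert (Hma : - a <= m) by (apply Hub; auto).
  assert (Hright : forall t, - m < t <= b -> w t = w0_of alpha p n t).
  { intros t Ht. destruct (classic (exists x, E x /\ - t < x)) as [[x [[Hx1 Hx2] Hx3]]|Hno].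
    - apply Hx2; lra.
    - assert (m <= - t).
      { apply Hlub. intros x Hx. destruct (Rle_or_lt x (- t)); auto. exfalso; apply Hno; eauto. }
      lra. }
  destruct (Rlt_or_le 0 (- m)) as [Hs|Hs].
  - destruct (unique_left alpha p n w (- m) b Ha Hp Hn HB Hw ltac:(lra) Hright) as [d [Hd Hdd]].
    assert (E (- (- m - d))).
    { split; [lra|]. intros t Ht. apply Hdd; lra. }
    apply Hub in H. lra.
  - destruct Hw as [Hw0 [Hlim _]].
    destruct (near_zero w Hw0 Hlim) as [d1 [Hd1 H1]].
    destruct (w0_small alpha p n Hp Ha) as [d2 [Hd2 H2]].
    set (h := Rmin (Rmin d1 1) (Rmin b d2) / 2).
    assert (Q1 := Rmin_l d1 1). assert (Q2 := Rmin_r d1 1).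
    assert (Q3 := Rmin_l b d2). assert (Q4 := Rmin_r b d2).
    assert (Q5 := Rmin_l (Rmin d1 1) (Rmin b d2)). assert (Q6 := Rmin_r (Rmin d1 1) (Rmin b d2)).
    assert (0 < Rmin (Rmin d1 1) (Rmin b d2)) by (repeat apply Rmin_pos; lra).
    assert (Hh : 0 < h) by (unfold h; lra).
    assert (1 - h < w h) by (apply H1; unfold h; lra).
    assert (w0_of alpha p n h < 1 / 2) by (apply H2; unfold h; lra).
    assert (w h = w0_of alpha p n h) by (apply Hright; unfold h; lra).
    unfold h in *. lra.
Qed.

Lemma gap N (t : nat -> R) x : t 0%nat < x -> (forall i, (i <= N)%nat -> x <> t i) ->
  t N < x \/ exists j, (j < N)%nat /\ t j < x /\ x < t (S j).
Proof.
  induction N as [|N IH]; intros H0 Hne; [left; auto|].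
  destruct IH as [H|[j [Hj Hx]]]; auto.
  - destruct (Rlt_or_le (t (S N)) x) as [H'|H']; [left; auto|].
    right. exists N. split; [lia|]. split; auto.
    destruct H'; auto. exfalso. apply (Hne (S N)); auto.
  - right. exists j. split; [lia|auto].
Qed.

Lemma points (P : R -> Prop) : (forall l : list R, exists x, P x /\ ~ In x l) ->
  forall N, exists t : nat -> R, (forall i, (i <= N)%nat -> P (t i)) /\
    (forall i, (i < N)%nat -> t i < t (S i)).
Proof.
  intros Hnew N. induction N as [|N [t [HP Hm]]].
  - destruct (Hnew nil) as [x [Hx _]]. exists (fun _ => x). split; [auto | intros; lia].
  - destruct (Hnew (map t (seq 0 (S N)))) as [x [Hx Hnin]].
    assert (Hne : forall i, (i <= N)%nat -> x <> t i).
    { intros i Hi Heq. apply Hnin. rewrite Heq. apply in_map. apply in_seq. lia. }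
    destruct (Rlt_or_le x (t 0%nat)) as [Hlt|Hle].
    + exists (fun i => match i with O => x | S j => t j end). split.
      * intros [|i] Hi; auto. apply HP; lia.
      * intros [|i] Hi; auto. apply Hm; lia.
    + assert (H0 : t 0%nat < x) by (destruct Hle; auto; exfalso; apply (Hne 0%nat); auto; lia).
      destruct (gap N t x H0 Hne) as [HN|[j [Hj [Hx1 Hx2]]]].
      * exists (fun i => if Nat.leb i N then t i else x). split.
        -- intros i Hi. destruct (Nat.leb_spec i N); auto.
        -- intros i Hi. destruct (Nat.leb_spec i N); destruct (Nat.leb_spec (S i) N); try lia.
           ++ apply Hm; lia.
           ++ assert (i = N) by lia. subst; auto.
      * exists (fun i => if Nat.leb i j then t i else if Nat.eqb i (S j) then x else t (i - 1)%nat).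
        split.
        -- intros i Hi. destruct (Nat.leb_spec i j); [apply HP; lia|].
           destruct (Nat.eqb_spec i (S j)); auto. apply HP; lia.
        -- intros i Hi.
           destruct (Nat.leb_spec i j); destruct (Nat.leb_spec (S i) j);
             destruct (Nat.eqb_spec i (S j)); destruct (Nat.eqb_spec (S i) (S j)); try lia.
           ++ apply Hm; lia.
           ++ assert (i = j) by lia. subst; auto.
           ++ subst i. replace (S (S j) - 1)%nat with (S j) by lia. auto.
           ++ replace (S i - 1)%nat with i by lia.
              assert (Hq := Hm (i - 1)%nat ltac:(lia)).
              replace (S (i - 1)) with i in Hq by lia. exact Hq.
Qed.

Theorem lemma4p1 (alpha p : R) (n : nat) (w : R -> R) :
  0 <= alpha -> 1 < p -> (1 <= n)%nat ->
  beta_of alpha p * (beta_of alpha p + INR n - 2) > 0 ->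
  is_mems_solution alpha p n w ->
  intersect_infinitely w (w0_of alpha p n) ->
  changes_sign_infinitely (Derive (lambda_of alpha p w)).
Proof.
  intros Ha Hp Hn HB Hw Hinf.
  assert (HB' : 0 < beta_of alpha p * (beta_of alpha p + INR n - 2)) by lra.
  set (B := beta_of alpha p * (beta_of alpha p + INR n - 2)) in *.
  set (lam := lambda_of alpha p w).
  destruct Hw as [Hw0 [Hlim [Hpos Hode]]] eqn:Hweq.
  set (P := fun x => 0 < x /\ w x = w0_of alpha p n x).
  assert (Hnew : forall l : list R, exists x, P x /\ ~ In x l).
  { intros l. apply NNPP. intro Hno. apply Hinf. exists l. intros x Hx Hwx.
    apply NNPP. intro Hnin. apply Hno. exists x. split; [split; auto | auto]. }
  intro k.
  destruct (points P Hnew (S k)) as [t [HP Hm]].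
  assert (Hder : forall x, 0 < x -> derivable_pt_lim lam x (Derive lam x)).
  { intros x Hx. apply is_derive_Reals, Derive_correct. apply ex_derive_lambda; auto.
    apply Hpos; lra. apply Hode; auto. }
  assert (Hsig : forall i, (i <= k)%nat ->
     (exists x, t i <= x <= t (S i) /\ Derive lam x > 0) /\
     (exists y, t i <= y <= t (S i) /\ Derive lam y < 0)).
  { intros i Hi.
    destruct (HP i ltac:(lia)) as [Hti Hwi]. destruct (HP (S i) ltac:(lia)) as [Hti' Hwi'].
    assert (Hlt := Hm i ltac:(lia)).
    assert (Hc : exists c, t i <= c <= t (S i) /\ w c <> w0_of alpha p n c).
    { apply NNPP. intro Hno. apply (noint alpha p n w (t i) (t (S i)) Ha Hp Hn HB' Hw); [lra|].
      intros c Hc. apply NNPP. intro Hne. apply Hno. exists c. auto. }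
    destruct Hc as [c [Hc Hwc]].
    apply (both_signs lam (Derive lam) B (t i) (t (S i)) c); auto.
    - intros x Hx. apply Hder. lra.
    - apply lam_iff; auto. apply Hpos; lra.
    - apply lam_iff; auto. apply Hpos; lra.
    - intro Hlc. apply Hwc. apply (lam_iff alpha p n w c); auto; try lra. apply Hpos; lra. }
  assert (Hch : forall i, exists x, (i <= k)%nat -> t i <= x <= t (S i) /\
      (if Nat.even i then Derive lam x > 0 else Derive lam x < 0)).
  { intros i. destruct (Compare_dec.le_lt_dec i k) as [Hi|Hi].
    - destruct (Hsig i Hi) as [[x [Hx1 Hx2]] [y [Hy1 Hy2]]].
      destruct (Nat.even i); [exists x | exists y]; auto.
    - exists 0. intros; lia. }
  destruct (functional_choice _ Hch) as [s Hs].
  exists s. split.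
  - destruct (Hs 0%nat ltac:(lia)) as [H1 _]. destruct (HP 0%nat ltac:(lia)). lra.
  - intros i Hi.
    destruct (Hs i ltac:(lia)) as [H1 H2]. destruct (Hs (S i) ltac:(lia)) as [H3 H4].
    rewrite Nat.even_succ, <- Nat.negb_even in H4.
    destruct (Nat.even i); simpl in H4.
    + split; [|nra].
      destruct (Rle_lt_or_eq_dec _ _ (Rle_trans _ _ _ (proj2 H1) (proj1 H3))) as [?|He]; auto.
      rewrite He in H2. lra.
    + split; [|nra].
      destruct (Rle_lt_or_eq_dec _ _ (Rle_trans _ _ _ (proj2 H1) (proj1 H3))) as [?|He]; auto.
      rewrite He in H2. lra.
Qed.
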